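(* Let $X$ be a space, $Y\subseteq X$ a subspace and $\tau$ a cardinal. Then $Y$ is $F_\tau$-embedded in $X$ if one of the following holds: (a) $X$ is a normal $T_1$-space, $\tau\geq\aleph_0$ and $nw(Y)\leq\tau$; (b) $Y$ is preopen in $X$ (i.e., $Y\subseteq \mathrm{int}_X(\mathrm{cl}_X(Y))$) and there is a family $\alpha$ of open subsets of $Y$ which is the union of $\tau$ strongly point-finite families and which F-separates $Y$ (in the space $Y$).
   Context: ''Space'' means topological $T_0$-space. $nw(Y)$ is the network weight of $Y$. A family of subsets of a set is strongly point-finite if every countably infinite subfamily contains a finite subfamily with empty intersection. A family $\mathcal{U}$ of subsets of a space $W$ F-separates $S\subseteq W$ if for distinct $x,y\in S$ there is $U\in\mathcal{U}$ with $x\in U$ and $y\notin\mathrm{cl}_W(U)$, or vice versa. $Y$ is $F_\tau$-embedded in $X$ if there is a family of open subsets of $X$ which is the union of $\tau$ point-finite families of open subsets of $X$ and which F-separates $Y$ (closures taken in $X$). *)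

(* Defs.v *)
From HB Require Import structures.
From mathcomp Require Import all_boot all_order all_algebra.
From mathcomp Require Import all_classical all_reals all_analysis.
Set Implicit Arguments. Unset Strict Implicit. Unset Printing Implicit Defensive.
Local Open Scope classical_set_scope.

(* Subspaces Y of a topological space X are represented as subsets Y : set X
   carrying the subspace topology: a set A is open in Y iff A = U `&` Y with
   U open in X, and cl_Y(A) = cl_X(A) `&` Y. Families of subsets are sets of
   sets (set (set X)); a cardinal tau is represented by an index type I,
   tau = |I|. *)

Section Defs.
Context {X : topologicalType}.

Definition open_in (Y A : set X) : Prop :=
  exists U : set X, open U /\ A = U `&` Y.

Definition closure_in (W A : set X) : set X := closure A `&` W.

Definition point_finite (fam : set (set X)) : Prop :=
  forall x : X, finite_set [set A | fam A /\ A x].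

Definition strongly_point_finite (fam : set (set X)) : Prop :=
  forall S : set (set X), S `<=` fam -> countable S -> infinite_set S ->
    exists F : set (set X),
      [/\ F `<=` S, finite_set F, F !=set0 & \bigcap_(A in F) A = set0].

Definition F_separates (W : set X) (fam : set (set X)) (S : set X) : Prop :=
  forall x y : X, S x -> S y -> x <> y ->
    exists U : set X, fam U /\
      ((U x /\ ~ closure_in W U y) \/ (U y /\ ~ closure_in W U x)).

Definition F_embedded (I : Type) (Y : set X) : Prop :=
  exists fams : I -> set (set X),
    (forall i, fams i `<=` open /\ point_finite (fams i)) /\
    F_separates setT (\bigcup_(i in setT) fams i) Y.

Definition network_of (Y : set X) (N : set (set X)) : Prop :=
  (forall A, N A -> A `<=` Y) /\
  (forall V : set X, open_in Y V -> forall y, V y -> Y y ->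
     exists2 A, N A & A y /\ A `<=` V).

Definition nw_le (Y : set X) (I : Type) : Prop :=
  exists N : set (set X), network_of Y N /\ (N #<= [set: I])%card.

Definition preopen (Y : set X) : Prop := Y `<=` interior (closure Y).

End Defs.

(* Main.v *)
Require Import Defs.
From mathcomp Require Import all_boot all_order all_algebra.
From mathcomp Require Import all_classical all_reals all_analysis.
Local Open Scope classical_set_scope.

Set Implicit Arguments. Unset Strict Implicit.

Lemma chain2 T (F : set (set T)) (G1 G2 : set T) :
  total_on F subset -> F G1 -> F G2 -> exists G, [/\ F G, G1 `<=` G & G2 `<=` G].
Proof.
move=> tot F1 F2; case: (tot _ _ F1 F2) => H.
- by exists G2; split.
- by exists G1; split.
Qed.

Lemma inj_cmp (A B : Type) :
  (exists f : A -> B, injective f) \/ (exists g : B -> A, injective g).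
Proof.
pose P := fun G : set (A * B) =>
  (forall a b b', G (a, b) -> G (a, b') -> b = b') /\
  (forall a a' b, G (a, b) -> G (a', b) -> a = a').
have [G [[PG1 PG2] Gmax]] : exists G, P G /\ forall G', G `<` G' -> ~ P G'.
  apply: Zorn_bigcup => F FP tot; split.
  - move=> a b b' [G1 F1 H1] [G2 F2 H2].
    have [G [FG s1 s2]] := chain2 tot F1 F2.
    exact: (proj1 (FP _ FG)) (s1 _ H1) (s2 _ H2).
  - move=> a a' b [G1 F1 H1] [G2 F2 H2].
    have [G [FG s1 s2]] := chain2 tot F1 F2.
    exact: (proj2 (FP _ FG)) (s1 _ H1) (s2 _ H2).
case: (pselect (forall a, exists b, G (a, b))) => [Hd|Hd].
  left; exists (fun a => proj1_sig (cid (Hd a))) => a a' E.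
  case: (cid (Hd a)) E => b Hb; case: (cid (Hd a')) => b' Hb' /= E.
  by subst b'; exact: PG2 Hb Hb'.
case: (pselect (forall b, exists a, G (a, b))) => [Hr|Hr].
  right; exists (fun b => proj1_sig (cid (Hr b))) => b b' E.
  case: (cid (Hr b)) E => a Ha; case: (cid (Hr b')) => a' Ha' /= E.
  by subst a'; exact: PG1 Ha Ha'.
exfalso.
have [a0 Ha0] : exists a0, ~ exists b, G (a0, b).
  by apply: contra_notP Hd => H a; apply: contra_notP H => H; exists a.
have [b0 Hb0] : exists b0, ~ exists a, G (a, b0).
  by apply: contra_notP Hr => H b; apply: contra_notP H => H; exists b.
apply: (Gmax (G `|` [set (a0, b0)])).
  split; first by move=> p Gp; left.
  move=> /(_ (a0, b0) (or_intror erefl)) H; apply: Ha0; by exists b0.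
split.
- move=> a b b' [H|H] [H'|H'].
  + exact: PG1 H H'.
  + case: H' => ? ?; subst; exfalso; apply: Ha0; by exists b.
  + case: H => ? ?; subst; exfalso; apply: Ha0; by exists b'.
  + by case: H => _ ->; case: H' => _ ->.
- move=> a a' b [H|H] [H'|H'].
  + exact: PG2 H H'.
  + case: H' => ? ?; subst; exfalso; apply: Hb0; by exists a.
  + case: H => ? ?; subst; exfalso; apply: Hb0; by exists a'.
  + by case: H => -> _; case: H' => -> _.
Qed.
Lemma cardT_inj (A B : Type) : ([set: A] #<= [set: B])%card -> exists e : A -> B, injective e.
Proof.
move=> /card_leP [f].
have hT : forall (T : Type) (x : T), x \in [set: T] by move=> T x; apply/mem_set.
pose e (n : A) : B := val (f (SigSub (hT _ n))).
exists e => m n.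
rewrite /e => /val_inj.
move=> /(@inj _ _ _ f) H.
have := H (mem_set Logic.I) (mem_set Logic.I).
by move=> /(congr1 val).
Qed.
Lemma nat2_inj : exists c : nat * nat -> nat, injective c.
Proof. apply: cardT_inj; exact: countableP. Qed.
Lemma inf_nat_inj (I : Type) : infinite_set [set: I] -> exists e : nat -> I, injective e.
Proof. by move=> /infiniteP; apply: cardT_inj. Qed.

Definition Cdom {I : Type} (G : set ((I * I) * I)) : set I :=
  [set a | exists b z, G ((a, b), z)].

Definition P0 {I : Type} (G : set ((I * I) * I)) : Prop :=
  [/\ (forall p z z', G (p, z) -> G (p, z') -> z = z'),
      (forall p p' z, G (p, z) -> G (p', z) -> p = p'),
      (forall a b, (exists z, G ((a, b), z)) <-> Cdom G a /\ Cdom G b) &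
      (forall p z, G (p, z) -> Cdom G z)].

Lemma P0_set0 I : P0 (@set0 ((I * I) * I)).
Proof.
split.
- by move=> ? ? ? [].
- by move=> ? ? ? [].
- by move=> a b; split=> [[z []]|[[? [? []]]]].
- by move=> p z [].
Qed.

Lemma Cdom_mono I (G G' : set ((I * I) * I)) : G `<=` G' -> Cdom G `<=` Cdom G'.
Proof. by move=> s a [b [z H]]; exists b, z; apply: s. Qed.

Lemma P0_chain I (F : set (set ((I * I) * I))) :
  (forall G, F G -> P0 G) -> total_on F subset -> P0 (\bigcup_(G in F) G).
Proof.
move=> FP tot; have sub : forall G, F G -> G `<=` \bigcup_(G in F) G.
  by move=> G FG q Gq; exists G.
split.
- move=> p z z' [G1 F1 H1] [G2 F2 H2].
  have [G [FG s1 s2]] := chain2 tot F1 F2.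
  by case: (FP _ FG) => Fu _ _ _; apply: Fu (s1 _ H1) (s2 _ H2).
- move=> p p' z [G1 F1 H1] [G2 F2 H2].
  have [G [FG s1 s2]] := chain2 tot F1 F2.
  by case: (FP _ FG) => _ In _ _; apply: In (s1 _ H1) (s2 _ H2).
- move=> a b; split.
  + move=> [z [G FG H]].
    case: (FP _ FG) => _ _ Do _.
    have [Ca Cb] := (proj1 (Do a b)) (ex_intro _ z H).
    by split; apply: (Cdom_mono (sub _ FG)).
  + move=> [[b1 [z1 [G1 F1 H1]]] [b2 [z2 [G2 F2 H2]]]].
    have [G [FG s1 s2]] := chain2 tot F1 F2.
    case: (FP _ FG) => _ _ Do _.
    have [z Hz] : exists z, G ((a, b), z).
      apply/(proj2 (Do a b)); split.
      * by exists b1, z1; apply: s1.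
      * by exists b2, z2; apply: s2.
    by exists z, G.
- move=> p z [G FG H]; case: (FP _ FG) => _ _ _ Im.
  exact: (Cdom_mono (sub _ FG)) (Im _ _ H).
Qed.

Lemma kappa_max (I : Type) (e : nat -> I) (c : nat * nat -> nat) :
  injective e -> injective c ->
  exists Gm : set ((I * I) * I),
    [/\ forall n, Cdom Gm (e n), P0 Gm &
        forall G', Gm `<` G' -> P0 G' -> False].
Proof.
move=> einj cinj.
pose G0 : set ((I * I) * I) := [set q | exists a b, q = ((e a, e b), e (c (a, b)))].
have P0G0 : P0 G0.
  split.
  - move=> p z z' [a [b E]] [a' [b' E']].
    case: E => Ep Ez; case: E' => Ep' Ez'; subst.
    move: Ep' => [/einj Ea /einj Eb]; by subst.
  - move=> p p' z [a [b E]] [a' [b' E']].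
    case: E => Ep Ez; case: E' => Ep' Ez'; subst.
    by move: Ez' => /einj /cinj [-> ->].
  - move=> x y; split.
    + move=> [z [a [b E]]]; case: E => Ex Ey Ez; subst.
      split; [exists (e b), (e (c (a, b))); exists a, b => // | ].
      by exists (e b), (e (c (b, b))); exists b, b.
    + move=> [[y1 [z1 [a [b E]]]] [y2 [z2 [a' [b' E']]]]].
      case: E => Ex _ _; case: E' => Ey _ _; subst.
      by exists (e (c (a, a'))), a, a'.
  - move=> p z [a [b E]]; case: E => _ ->.
    by exists (e (c (a, b))), (e (c (c (a, b), c (a, b)))); exists (c (a, b)), (c (a, b)).
have CG0 : forall n, Cdom G0 (e n).
  by move=> n; exists (e n), (e (c (n, n))); exists n, n.
pose P := fun G : set ((I * I) * I) => G = set0 \/ (G0 `<=` G /\ P0 G).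
have [Gm [Pm Gmax]] : exists G, P G /\ forall G', G `<` G' -> ~ P G'.
  apply: Zorn_bigcup => F FP tot.
  case: (pselect (exists G, F G /\ G !=set0)) => [[G [FG [q Gq]]]|H].
  - right; split.
    + case: (FP _ FG) => [E|[s _]]; first by rewrite E in Gq.
      by move=> r /s Gr; exists G.
    + apply: P0_chain => // G' FG'.
      by case: (FP _ FG') => [->|[]//]; exact: P0_set0.
  - left; apply/seteqP; split => // q [G FG Gq].
    by exfalso; apply: H; exists G; split => //; exists q.
have [sG0 P0m] : G0 `<=` Gm /\ P0 Gm.
  case: Pm => // E; exfalso; apply: (Gmax G0); last by right; split.
  rewrite E; split => // /(_ ((e 0, e 0), e (c (0, 0)))) H.
  by apply: H; exists 0, 0.
exists Gm; split => //.
- by move=> n; apply: (Cdom_mono sG0).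
- move=> G' lt P0G'; apply: (Gmax G' lt); right; split => //.
  by apply: subset_trans sG0 (properW lt).
Qed.

Lemma kappa2 (I : Type) : infinite_set [set: I] -> exists k : I * I -> I, injective k.
Proof.
move=> /inf_nat_inj [e einj]; have [c cinj] := nat2_inj.
have [Gm [De [Fun Inj Dom Img] Gmax]] := kappa_max einj cinj.
set D := Cdom Gm in De Dom Img Gmax.
pose phi (a b : I) : I := match pselect (exists z, Gm ((a, b), z)) with
  | left h => proj1_sig (cid h) | right _ => e 0 end.
have phiG : forall a b, D a -> D b -> Gm ((a, b), phi a b).
  move=> a b Da Db; rewrite /phi; case: pselect => [h|h].
  - by case: (cid h).
  - by exfalso; apply: h; apply/(proj2 (Dom a b)).
have phiD : forall a b, D a -> D b -> D (phi a b).
  by move=> a b Da Db; apply: (Img _ _ (phiG _ _ Da Db)).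
have phi_inj : forall a b a' b', D a -> D b -> D a' -> D b' ->
    phi a b = phi a' b' -> a = a' /\ b = b'.
  move=> a b a' b' Da Db Da' Db' E.
  have H1 := phiG _ _ Da Db; have H2 := phiG _ _ Da' Db'.
  rewrite E in H1; by case: (Inj _ _ _ H1 H2).
have e01 : e 0 <> e 1 by move=> /einj.
have e02 : e 0 <> e 2 by move=> /einj.
have e12 : e 1 <> e 2 by move=> /einj.
case: (inj_cmp {x | ~ D x} {x | D x}) => [[u uinj]|[j jinj]].
- pose psi (i : I) : I := match pselect (D i) with
    | left _ => phi (e 0) i | right h => phi (e 1) (proj1_sig (u (exist _ i h))) end.
  have psiD : forall i, D (psi i).
    move=> i; rewrite /psi; case: pselect => h; apply: (phiD) => //.
    exact: proj2_sig.
  have psi_inj : injective psi.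
    move=> i i'; rewrite /psi; case: pselect => h; case: pselect => h'.
    + by move=> /phi_inj [] //.
    + move=> /phi_inj [] //; try exact: proj2_sig.
    + move=> /phi_inj [] //; try exact: proj2_sig.
      by move=> E; exfalso; apply: e01.
    + move=> /phi_inj [] //; try exact: proj2_sig.
      move=> _ E; have : u (exist _ i h) = u (exist _ i' h').
        by apply: eq_sig_hprop => // x p q; exact: Prop_irrelevance.
      by move=> /uinj /(congr1 (@proj1_sig _ _)).
  exists (fun p => phi (psi p.1) (psi p.2)) => [[a b] [a' b']] /=.
  by move=> /phi_inj [] // /psi_inj -> /psi_inj ->.
exfalso.
pose jj (a : I) : I := match pselect (D a) with
  | left h => proj1_sig (j (exist _ a h)) | right _ => a end.
have jjD : forall a, D a -> ~ D (jj a).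
  move=> a Da; rewrite /jj; case: pselect => h; last by [].
  exact: (proj2_sig (j (exist _ a h))).
have jj_inj : forall a a', D a -> D a' -> jj a = jj a' -> a = a'.
  move=> a a' Da Da'; rewrite /jj; case: pselect => h; last by [].
  case: pselect => h' E; last by [].
  have : j (exist _ a h) = j (exist _ a' h').
    by apply: eq_sig_hprop => // x p q; exact: Prop_irrelevance.
  by move=> /jinj /(congr1 (@proj1_sig _ _)).
pose Bs := [set b | exists a, D a /\ jj a = b].
pose jinv (b : I) : I := match pselect (exists a, D a /\ jj a = b) with
  | left h => proj1_sig (cid h) | right _ => b end.
have jinvP : forall b, Bs b -> D (jinv b) /\ jj (jinv b) = b.
  move=> b Bb; rewrite /jinv; case: pselect => // h; by case: (cid h).
have BD : forall b, Bs b -> ~ D b.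
  by move=> b [a [Da <-]]; apply: jjD.
pose r (x : I) : I := if pselect (D x) then x else jinv x.
have rD : forall x, D x \/ Bs x -> D (r x).
  move=> x Hx; rewrite /r; case: pselect => // h.
  by case: Hx => // /jinvP [].
have r_inj : forall x y, D x \/ Bs x -> D y \/ Bs y -> (D x <-> D y) -> r x = r y -> x = y.
  move=> x y Hx Hy Exy; rewrite /r; case: pselect => hx; case: pselect => hy //.
  - by exfalso; apply: hy; apply/Exy.
  - by exfalso; apply: hx; apply/Exy.
  - move=> /= E; case: Hx => // Bx; case: Hy => // By.
    by rewrite -(proj2 (jinvP _ Bx)) -(proj2 (jinvP _ By)) E.
pose tag (a b : I) : I := if pselect (D a) then e 0 else if pselect (D b) then e 1 else e 2.
have tagD : forall a b, D (tag a b).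
  move=> a b; rewrite /tag; case: pselect => ? /=; first exact: De.
  by case: pselect => ? /=; exact: De.
have tag_inj : forall a b a' b', ~ (D a /\ D b) -> ~ (D a' /\ D b') ->
    tag a b = tag a' b' -> (D a <-> D a') /\ (D b <-> D b').
  move=> a b a' b' nab nab'; rewrite /tag.
  case: (pselect (D a)) => ha; case: (pselect (D a')) => ha';
    case: (pselect (D b)) => hb; case: (pselect (D b')) => hb' /= E;
    first [ tauto | by case: (e01 E) | by case: (e01 (esym E))
          | by case: (e02 E) | by case: (e02 (esym E))
          | by case: (e12 E) | by case: (e12 (esym E)) ].
pose Nrel := fun q : (I * I) * I =>
  [/\ D q.1.1 \/ Bs q.1.1, D q.1.2 \/ Bs q.1.2, ~ (D q.1.1 /\ D q.1.2) &
      q.2 = jj (phi (tag q.1.1 q.1.2) (phi (r q.1.1) (r q.1.2)))].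
have NB : forall q, Nrel q -> Bs q.2.
  move=> q [h1 h2 _ ->]; exists (phi (tag q.1.1 q.1.2) (phi (r q.1.1) (r q.1.2))).
  by split => //; apply: (phiD) => //; apply: (phiD); apply: (rD).
pose G' := Gm `|` Nrel.
have CG1 : forall x, Cdom G' x -> D x \/ Bs x.
  move=> x [b [z [H|[]]]] //.
  by left; exists b, z.
have CG2 : forall x, D x \/ Bs x -> Cdom G' x.
  move=> x [Dx|Bx].
  - by exists x, (phi x x); left; apply: (phiG).
  - exists x, (jj (phi (tag x x) (phi (r x) (r x)))); right.
    split => //=; [by right | by right | by case=> /(BD _ Bx)].
have GmD : forall a b z, Gm ((a, b), z) -> D a /\ D b.
  by move=> a b z H; apply/(proj1 (Dom a b)); exists z.
apply: (Gmax G').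
  split; first by move=> q Gq; left.
  have Bj : Bs (jj (e 0)) by exists (e 0).
  move=> /(_ ((jj (e 0), jj (e 0)), jj (phi (tag (jj (e 0)) (jj (e 0)))
              (phi (r (jj (e 0))) (r (jj (e 0))))))) H.
  have Nq : G' ((jj (e 0), jj (e 0)), jj (phi (tag (jj (e 0)) (jj (e 0)))
              (phi (r (jj (e 0))) (r (jj (e 0)))))).
    right; split => //=; [by right | by right | by case=> /(BD _ Bj)].
  by case: (GmD _ _ _ (H Nq)) => /(BD _ Bj).
split.
- move=> [a b] z z' [H|H] [H'|H'].
  + exact: Fun H H'.
  + by case: H' => /= _ _ []; apply: (GmD) H.
  + by case: H => /= _ _ []; apply: (GmD) H'.
  + by case: H => _ _ _ /= ->; case: H' => _ _ _ /= ->.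
- move=> [a b] [a' b'] z [H|H] [H'|H'].
  + exact: Inj H H'.
  + by exfalso; apply: (BD _ (NB _ H')); apply: (Img) H.
  + by exfalso; apply: (BD _ (NB _ H)); apply: (Img) H'.
  + case: H => /= ha hb nab E; case: H' => /= ha' hb' nab' E'.
    rewrite E' in E.
    move: E => /jj_inj E.
    have {E} E : phi (tag a' b') (phi (r a') (r b')) = phi (tag a b) (phi (r a) (r b)).
      apply: E; apply: (phiD) => //; apply: (phiD); exact: rD.
    move: E => /phi_inj [] //; try (apply: (phiD); exact: rD).
    move=> Et /phi_inj [] //; try exact: rD.
    move=> Ea Eb.
    have [Ia Ib] := tag_inj _ _ _ _ nab' nab Et.
    congr (_, _).
    * by symmetry; apply: (r_inj).
    * by symmetry; apply: (r_inj).
- move=> a b; split.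
  + move=> [z Hz]; split; first by exists b, z.
    apply: (CG2); case: Hz => [/GmD []|[]] //; by left.
  + move=> [/CG1 ha /CG1 hb].
    case: (pselect (D a /\ D b)) => [[Da Db]|nab].
    * by exists (phi a b); left; apply: (phiG).
    * by exists (jj (phi (tag a b) (phi (r a) (r b)))); right; split.
- move=> p z [H|H].
  + by apply: (CG2); left; apply: (Img) H.
  + by apply: (CG2); right; apply: (NB _ H).
Qed.

Lemma card_le_nat_inj T (S : set T) :
  ([set: nat] #<= S)%card -> exists g : nat -> T, injective g /\ forall n, S (g n).
Proof.
move=> /card_leP [f].
have hT : forall (x : nat), x \in [set: nat] by move=> x; apply/mem_set.
exists (fun n => val (f (SigSub (hT n)))); split; last by move=> n; exact: set_valP.
move=> m n /val_inj /(@inj _ _ _ f) H.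
have := H (mem_set Logic.I) (mem_set Logic.I).
by move=> /(congr1 val).
Qed.

Section CaseB.
Context {X : topologicalType}.

Definition Oset (Y A : set X) : set X := interior (closure Y) `&` ~` closure (Y `\` A).

Lemma Oset_open Y A : open (Oset Y A).
Proof. by apply: openI; [exact: open_interior | rewrite openC; exact: closed_closure]. Qed.

Lemma Oset_sub Y A : preopen Y -> A `<=` Y -> open_in Y A -> A `<=` Oset Y A.
Proof.
move=> pY AY [U [oU EA]] a Aa; split; first exact: pY (AY _ Aa).
move=> Hcl.
have Ua : U a by move: Aa; rewrite EA => -[].
have [w [[Yw nAw] Uw]] := Hcl U (open_nbhs_nbhs (conj oU Ua)).
by apply: nAw; rewrite EA.
Qed.

Lemma Oset_Y Y A w : Oset Y A w -> Y w -> A w.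
Proof.
move=> [_ ncl] Yw; apply: contra_notP ncl => nAw.
by apply: subset_closure.
Qed.

Lemma Oset_cl Y A : Oset Y A `<=` closure A.
Proof.
move=> z Oz B nB.
have nOB : nbhs z (Oset Y A `&` B).
  by apply: filterI => //; apply: open_nbhs_nbhs; split => //; exact: Oset_open.
have clY : closure Y z by apply: interior_subset; case: Oz.
have [w [Yw [Ow Bw]]] := clY _ nOB.
by exists w; split => //; apply: Oset_Y Ow Yw.
Qed.

Lemma Oset_cl2 Y A : closure (Oset Y A) `<=` closure A.
Proof.
have -> : closure A = closure (closure A).
  by apply/closure_id; exact: closed_closure.
apply: closureS; exact: Oset_cl.
Qed.

Lemma Oset_pf Y (alpha : set (set X)) : preopen Y ->
  (forall A, alpha A -> A `<=` Y /\ open_in Y A) -> strongly_point_finite alpha ->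
  point_finite [set Oset Y A | A in alpha].
Proof.
move=> pY Ha spf z; apply: contrapT => /infiniteP /card_le_nat_inj [g [ginj gS]].
have hA : forall n, exists A, alpha A /\ Oset Y A = g n.
  by move=> n; case: (gS n) => -[A aA <-] _; exists A.
pose As n := proj1_sig (cid (hA n)).
have AsP : forall n, alpha (As n) /\ Oset Y (As n) = g n.
  by move=> n; rewrite /As; case: (cid (hA n)).
have As_inj : injective As.
  by move=> m n E; apply: ginj; rewrite -(proj2 (AsP m)) -(proj2 (AsP n)) E.
have [F [FS finF [A1 FA1] capF]] := spf (range As)
  ltac:(by move=> _ [n _ <-]; exact: (proj1 (AsP n)))
  ltac:(by apply: (card_le_trans (card_image_le _ _)); exact: card_lexx)
  ltac:(by rewrite (eq_finite_set (inj_card_eq (in2W As_inj))); exact: infinite_nat).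
have zO : forall A, F A -> Oset Y A z.
  move=> A /FS [n _ <-]; rewrite (proj2 (AsP n)); exact: (proj2 (gS n)).
have nW : nbhs z (\bigcap_(A in F) Oset Y A).
  have [s Fs] := finite_fsetP.1 finF.
  rewrite Fs; apply: filter_bigI => A As'.
  apply: open_nbhs_nbhs; split; first exact: Oset_open.
  by apply: zO; rewrite Fs.
have clY : closure Y z by apply: interior_subset; case: (zO _ FA1).
have [w [Yw Ww]] := clY _ nW.
have : (\bigcap_(A in F) A) w by move=> A FA; apply: Oset_Y (Ww _ FA) Yw.
by rewrite capF.
Qed.

Lemma caseB (Y : set X) (I : Type) :
  (preopen Y /\
     exists alphas : I -> set (set X),
       (forall i, (forall A, alphas i A -> A `<=` Y /\ open_in Y A) /\
                  strongly_point_finite (alphas i)) /\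
       F_separates Y (\bigcup_(i in setT) alphas i) Y) ->
  F_embedded I Y.
Proof.
move=> [pY [alphas [Hal Hsep]]].
exists (fun i => [set Oset Y A | A in alphas i]); split.
  move=> i; split; last by apply: Oset_pf => //; case: (Hal i).
  by move=> _ [A _ <-]; exact: Oset_open.
move=> x y Yx Yy nxy.
have [U [[i _ aU] Hxy]] := Hsep x y Yx Yy nxy.
have [UY oU] := (proj1 (Hal i)) U aU.
exists (Oset Y U); split; first by exists i => //; exists U.
case: Hxy => [[Ux ncl]|[Uy ncl]].
- left; split; first exact: Oset_sub.
  move=> [/Oset_cl2 clU _]; apply: ncl; by split.
- right; split; first exact: Oset_sub.
  move=> [/Oset_cl2 clU _]; apply: ncl; by split.
Qed.

End CaseB.

Section CaseA.
Context {X : topologicalType}.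

Lemma normal_sep (C W : set X) : normal_space X -> closed C -> open W -> C `<=` W ->
  exists U, [/\ open U, C `<=` U & closure U `<=` W].
Proof.
move=> nX cC oW CW.
have [V nV clV] := nX C cC W (fun x Cx => open_nbhs_nbhs (conj oW (CW x Cx))).
exists (interior V); split.
- exact: open_interior.
- by move=> x Cx; exact: nV.
- apply: subset_trans clV; apply: closureS; exact: interior_subset.
Qed.

Definition Pw (A B U : set X) := [/\ open U, closure A `<=` U & closure U `<=` ~` closure B].

Definition Wset (A B : set X) : set X :=
  match pselect (exists U, Pw A B U) with
  | left h => proj1_sig (cid h) | right _ => set0 end.

Lemma Wset_spec A B : (exists U, Pw A B U) -> Pw A B (Wset A B).
Proof. by move=> h; rewrite /Wset; case: pselect => // h'; case: (cid h'). Qed.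

Lemma Wset_open A B : open (Wset A B).
Proof.
rewrite /Wset; case: pselect => [h|_]; last exact: open0.
by case: (cid h) => U [].
Qed.

Lemma caseA (Y : set X) (I : Type) :
  normal_space X -> accessible_space X -> infinite_set [set: I] -> nw_le Y I ->
  F_embedded I Y.
Proof.
move=> nX aX infI [N [[NY Nnet] NI]].
have [i0 _] := infinite_setN0 infI.
have [k kinj] := kappa2 infI.
move/card_leP: NI => [f].
pose phi (A : set X) : I := match pselect (N A) with
  | left h => val (f (SigSub (mem_set h))) | right _ => i0 end.
have phi_inj : forall A A', N A -> N A' -> phi A = phi A' -> A = A'.
  move=> A A' NA NA'; rewrite /phi; case: pselect => h; last by [].
  case: pselect => h' E; last by [].
  move: E => /val_inj /(@inj _ _ _ f) H.
  by have := H (mem_set Logic.I) (mem_set Logic.I) => /(congr1 val).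
exists (fun i => [set U | exists A B, [/\ N A, N B, k (phi A, phi B) = i & U = Wset A B]]).
split.
  move=> i; split.
    by move=> _ [A [B [_ _ _ ->]]]; exact: Wset_open.
  move=> z.
  have uniq : forall U U', (exists A B, [/\ N A, N B, k (phi A, phi B) = i & U = Wset A B]) ->
     (exists A B, [/\ N A, N B, k (phi A, phi B) = i & U' = Wset A B]) -> U = U'.
    move=> U U' [A [B [NA NB E ->]]] [A' [B' [NA' NB' E' ->]]].
    rewrite -E' in E; move: E => /kinj [] /(phi_inj _ _ NA NA') -> /(phi_inj _ _ NB NB') ->.
    by [].
  case: (pselect (exists U, (exists A B, [/\ N A, N B, k (phi A, phi B) = i & U = Wset A B]))).
  - move=> [U0 HU0]; apply: (sub_finite_set _ (finite_set1 U0)).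
    by move=> U [HU _]; apply: uniq HU HU0.
  - move=> h; apply: (sub_finite_set _ (finite_set0 _)).
    by move=> U [HU _]; apply: h; exists U.
move=> x y Yx Yy nxy.
have cx : closed [set x] by exact: accessible_closed_set1.
have cy : closed [set y] by exact: accessible_closed_set1.
have [Ux [oUx xUx clUx]] : exists U, [/\ open U, [set x] `<=` U & closure U `<=` ~` [set y]].
  apply: normal_sep => //; first by rewrite openC.
  by move=> _ -> E; apply: nxy.
have [A NA [Ax AU]] := Nnet (Ux `&` Y) (ex_intro _ Ux (conj oUx erefl)) x
   (conj (xUx x erefl) Yx) Yx.
have clA : closure A `<=` closure Ux.
  by apply: closureS => w /AU [].
have nyA : ~ closure A y by move=> /clA /clUx; apply.
have [Uy [oUy yUy clUy]] : exists U, [/\ open U, [set y] `<=` U & closure U `<=` ~` closure A].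
  apply: normal_sep => //; first by rewrite openC; exact: closed_closure.
  by move=> _ ->.
have [B NB [By BU]] := Nnet (Uy `&` Y) (ex_intro _ Uy (conj oUy erefl)) y
   (conj (yUy y erefl) Yy) Yy.
have clB : closure B `<=` closure Uy.
  by apply: closureS => w /BU [].
have hP : exists U, Pw A B U.
  have [U [oU AU' clU]] : exists U, [/\ open U, closure A `<=` U & closure U `<=` ~` closure B].
    apply: normal_sep => //; first exact: closed_closure.
    - by rewrite openC; exact: closed_closure.
    - by move=> a clAa /clB /clUy; apply.
  by exists U; split.
have [_ AW clW] := Wset_spec hP.
exists (Wset A B); split.
  by exists (k (phi A, phi B)) => //; exists A, B; split.
left; split.
- by apply: AW; apply: subset_closure.
- move=> [/clW H _]; apply: H; exact: subset_closure.
Qed.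

End CaseA.

Unset Implicit Arguments. Set Strict Implicit.

Theorem theorem4p8 (X : topologicalType) (Y : set X) (I : Type) :
  kolmogorov_space X ->
  ( (normal_space X /\ accessible_space X /\ infinite_set [set: I] /\ nw_le Y I)
    \/
    (preopen Y /\
     exists alphas : I -> set (set X),
       (forall i, (forall A, alphas i A -> A `<=` Y /\ open_in Y A) /\
                  strongly_point_finite (alphas i)) /\
       F_separates Y (\bigcup_(i in setT) alphas i) Y) ) ->
  F_embedded I Y.
Proof.
move=> _ [[nX [aX [infI nw]]]|H].
- exact: caseA.
- exact: caseB.
Qed.
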